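(* For every ${\bm\theta}\in\mathbb R^N$, $$P_{\cal B}P_{{\cal C}({\bm\theta})}=P_{\cal B}P_{{\cal C}(\bar{\bm\theta})}\quad\text{on } L^2(D),$$ where $\bar{\bm\theta}$ is the orthogonal projection of ${\bm\theta}$ onto $\mathrm{ran}(H)$ with respect to the inner product $\langle\cdot,\cdot\rangle_N$.
   Context: $D=\mathbb R$ or $[0,T]$ ($T$ an odd positive integer); $L^2(D)$ is the real Hilbert space with $\langle u,v\rangle=\int_D uv\,dt$. ${\cal B}$ is the closed subspace of signals bandlimited to $[-\pi,\pi]$ and $P_{\cal B}$ the orthogonal projection onto it (sinc / Dirichlet-kernel filtering). Fix $\alpha\ge0$, $N\ge1$, instants $0=t_0<t_1<\dots<t_N$ in $D$, and $h_n(t)=e^{-\alpha(t_n-t)}\mathbf 1_{[t_{n-1},t_n)}(t)$, $n=1,\dots,N$. For ${\bm\theta}\in\mathbb R^N$, ${\cal C}({\bm\theta})=\{u\in L^2(D):\langle h_n,u\rangle=\theta_n\ \forall n\}$ and $P_{{\cal C}({\bm\theta})}$ is the orthogonal projection onto this closed affine subspace. $H:{\cal B}\to\mathbb R^N$ is the linear ''sampling operator'' $Hu=(\langle h_n,u\rangle)_{n=1}^N$. On $\mathbb R^N$ use the weighted inner product $\langle{\mathbf u},{\mathbf v}\rangle_N=\sum_{n=1}^N u_nv_n/\|h_n\|^2$. *)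

(* Defs.v *)
From HB Require Import structures.
From mathcomp Require Import all_boot all_order all_algebra.
From mathcomp Require Import all_classical all_reals all_analysis.
Set Implicit Arguments. Unset Strict Implicit. Unset Printing Implicit Defensive.
Import Order.TTheory GRing.Theory Num.Theory.
Import numFieldNormedType.Exports.
Local Open Scope classical_set_scope.
Local Open Scope ring_scope.

Inductive domain := DomR | DomT of nat.

Definition domain_ok (Dm : domain) : Prop :=
  match Dm with DomR => True | DomT T => (0 < T)%N /\ odd T end.

Section Setting.
Variable R : realType.
Local Notation leb := (@lebesgue_measure R).

Definition Dset (Dm : domain) : set R :=
  match Dm with DomR => setT | DomT T => [set x | 0 <= x <= T%:R] end.

(* u : R -> R represents an element of L^2(D) (only its values on D matter). *)
Definition L2 (D : set R) (f : R -> R) : Prop :=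
  measurable_fun D f /\ (\int[leb]_(x in D) ((f x) ^+ 2)%:E < +oo)%E.

Definition ip (D : set R) (f g : R -> R) : R := \int[leb]_(x in D) (f x * g x).

Definition L2eq (D : set R) (f g : R -> R) : Prop := ae_eq leb D f g.

(* On R: u is (the real part of) the inverse Fourier transform of some
   F = A + iB in L^2 supported in [-pi,pi]:
     u(t) = (1/2pi) \int_{-pi}^{pi} (A(w) cos(wt) - B(w) sin(wt)) dw  a.e.
   On [0,T] (periodic signals, Dirichlet-kernel filtering): trigonometric
   polynomials of period T whose frequencies 2 pi k / T lie in [-pi,pi],
   i.e. 2k <= T. *)
Definition bandlimited (Dm : domain) (u : R -> R) : Prop :=
  match Dm with
  | DomR =>
      exists A B : R -> R,
        L2 [set w | - pi <= w <= pi] A /\ L2 [set w | - pi <= w <= pi] B /\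
        L2eq setT u (fun t => (2 * pi)^-1 *
          \int[leb]_(w in [set w | - pi <= w <= pi])
             (A w * cos (w * t) - B w * sin (w * t)))
  | DomT T =>
      exists a b : nat -> R,
        L2eq (Dset Dm) u (fun t => a 0%N +
          \sum_(1 <= k < T.+1 | (2 * k <= T)%N)
             (a k * cos (2 * pi * k%:R * t / T%:R) +
              b k * sin (2 * pi * k%:R * t / T%:R)))
  end.

Definition inB (Dm : domain) (u : R -> R) : Prop :=
  L2 (Dset Dm) u /\ bandlimited Dm u.

Definition hfun (alpha : R) (tt : nat -> R) (n : nat) (x : R) : R :=
  if (tt n.-1 <= x) && (x < tt n) then expR (- (alpha * (tt n - x))) else 0.

(* R^N is represented by 'I_N -> R; component i stands for index i+1. *)
Definition Hop (Dm : domain) (alpha : R) (tt : nat -> R) (N : nat)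
    (u : R -> R) : 'I_N -> R :=
  fun i => ip (Dset Dm) (hfun alpha tt i.+1) u.

Definition Cset (Dm : domain) (alpha : R) (tt : nat -> R) (N : nat)
    (theta : 'I_N -> R) : set (R -> R) :=
  [set u | L2 (Dset Dm) u /\ forall i : 'I_N, Hop Dm alpha tt u i = theta i].

Definition ipN (Dm : domain) (alpha : R) (tt : nat -> R) (N : nat)
    (x y : 'I_N -> R) : R :=
  \sum_(i < N) x i * y i / ip (Dset Dm) (hfun alpha tt i.+1) (hfun alpha tt i.+1).

Definition ranH (Dm : domain) (alpha : R) (tt : nat -> R) (N : nat)
    : set ('I_N -> R) :=
  [set y | exists u, inB Dm u /\ y = Hop Dm alpha tt u].

Definition is_projL2 (D : set R) (S : set (R -> R)) (u v : R -> R) : Prop :=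
  S v /\ forall w, S w ->
    ip D (fun x => u x - v x) (fun x => u x - v x)
    <= ip D (fun x => u x - w x) (fun x => u x - w x).

Definition is_projN (Dm : domain) (alpha : R) (tt : nat -> R) (N : nat)
    (S : set ('I_N -> R)) (x y : 'I_N -> R) : Prop :=
  S y /\ forall z, S z ->
    ipN Dm alpha tt (fun i => x i - y i) (fun i => x i - y i)
    <= ipN Dm alpha tt (fun i => x i - z i) (fun i => x i - z i).

End Setting.

(* Main.v *)
Require Import Defs.
From HB Require Import structures.
From mathcomp Require Import all_boot all_order all_algebra.
From mathcomp Require Import all_classical all_reals all_analysis.
From mathcomp Require Import ring lra measurable_realfun.
Set Implicit Arguments. Unset Strict Implicit. Unset Printing Implicit Defensive.
Import Order.TTheory GRing.Theory Num.Theory.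
Import numFieldNormedType.Exports.
Local Open Scope classical_set_scope.
Local Open Scope ring_scope.

Section L2th.
Variable R : realType.
Local Notation leb := (@lebesgue_measure R).
Variable D : set R.
Hypothesis mD : measurable D.

Lemma eqint (f g : R -> \bar R) : leb.-integrable D f -> {in D, f =1 g} ->
  leb.-integrable D g.
Proof. by move=> fi fg; exact: (@eq_integrable _ _ _ leb D mD f g fg fi). Qed.

Lemma L2_intP f : L2 D f <-> measurable_fun D f /\
   leb.-integrable D (EFin \o (fun x => f x ^+ 2)).
Proof.
have E (g : R -> R) : measurable_fun D g ->
  (\int[leb]_(x in D) `|(EFin \o (fun x => (g x ^+ 2)%R)) x| =
  \int[leb]_(x in D) ((g x) ^+ 2)%:E)%E.
  by move=> mg; apply: eq_integral => x _; rewrite /= ger0_norm ?sqr_ge0.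
split.
- move=> [mf fi]; split => //; apply/integrableP; split.
    by apply/measurable_EFinP; apply: measurable_funX.
  by rewrite E.
- move=> [mf /integrableP [_ fi]]; split => //.
  by rewrite -E.
Qed.

Lemma L2_mul_int f g : L2 D f -> L2 D g ->
  leb.-integrable D (EFin \o (fun x => f x * g x)).
Proof.
move=> /L2_intP [mf fi] /L2_intP [mg gi].
have hi : leb.-integrable D (EFin \o (fun x => f x ^+ 2 + g x ^+ 2)).
  have := @integrableD _ _ _ leb D mD _ _ fi gi. move=> H. by apply: (eqint H) => x _.
apply: (@le_integrable _ _ _ leb D mD _ _ _ _ hi).
- by apply/measurable_EFinP; apply: measurable_funM.
- move=> x _; rewrite /= lee_fin [X in _ <= X]ger0_norm; last by rewrite addr_ge0 ?sqr_ge0.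
  rewrite normrM.
  have h2 : `|f x| ^+ 2 = f x ^+ 2 by rewrite real_normK ?num_real.
  have h3 : `|g x| ^+ 2 = g x ^+ 2 by rewrite real_normK ?num_real.
  rewrite -h2 -h3; have := normr_ge0 (f x); have := normr_ge0 (g x). nra.
Qed.

Lemma quad0 (a b : R) : 0 <= b -> (forall t, 0 <= 2 * t * a + t ^+ 2 * b) -> a = 0.
Proof.
move=> b0 H.
have b1 : b + 1 != 0 by rewrite gt_eqF // ltr_wpDl.
have := H (- a / (b + 1)).
have -> : 2 * (- a / (b + 1)) * a + (- a / (b + 1)) ^+ 2 * b =
   - (a ^+ 2 * (b + 2)) / (b + 1) ^+ 2 by field.
rewrite pmulr_lge0; last by rewrite invr_gt0 exprn_gt0 // ltr_wpDl.
move=> h; have : a ^+ 2 * (b + 2) <= 0 by rewrite -oppr_ge0.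
move=> h2; nra.
Qed.

Lemma L2_lin f g c : L2 D f -> L2 D g -> L2 D (fun x => f x + c * g x).
Proof.
move=> Lf Lg; have fgi := L2_mul_int Lf Lg.
move: Lf Lg => /L2_intP [mf fi] /L2_intP [mg gi].
apply/L2_intP; split.
  apply: measurable_funD => //; apply: measurable_funM => //.
have H := @integrableD _ _ _ leb D mD _ _
  (@integrableD _ _ _ leb D mD _ _ fi (@integrableZl _ _ _ leb D mD (2 * c) _ fgi))
  (@integrableZl _ _ _ leb D mD (c ^+ 2) _ gi).
apply: (eqint H) => x _ /=.
rewrite -!EFinM -!EFinD; congr EFin; ring.
Qed.

Lemma ip_linr f g h c : L2 D f -> L2 D g -> L2 D h ->
  ip D f (fun x => g x + c * h x) = ip D f g + c * ip D f h.
Proof.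
move=> Lf Lg Lh; rewrite /ip.
have -> : \int[leb]_(x in D) (f x * (g x + c * h x)) =
   \int[leb]_(x in D) (f x * g x + c * (f x * h x)).
  by apply: eq_Rintegral => x _; ring.
rewrite (@RintegralD _ _ _ leb D _ _ mD (L2_mul_int Lf Lg)).
  by rewrite (@RintegralZl _ _ _ leb D _ _ mD (L2_mul_int Lf Lh)).
have H := @integrableZl _ _ _ leb D mD c _ (L2_mul_int Lf Lh).
by apply: (eqint H) => x _ /=; rewrite EFinM.
Qed.

Lemma ip_sym f g : ip D f g = ip D g f.
Proof. by rewrite /ip; apply: eq_Rintegral => x _; rewrite mulrC. Qed.

Lemma ip_linl f g h c : L2 D f -> L2 D g -> L2 D h ->
  ip D (fun x => g x + c * h x) f = ip D g f + c * ip D h f.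
Proof. by move=> *; rewrite ip_sym ip_linr // ![ip D f _]ip_sym. Qed.

Lemma ip_ge0 f : 0 <= ip D f f.
Proof. by apply: Rintegral_ge0 => x _; rewrite -expr2 sqr_ge0. Qed.

Lemma ip_quad f g c : L2 D f -> L2 D g ->
  ip D (fun x => f x + c * g x) (fun x => f x + c * g x) =
  ip D f f + 2 * c * ip D f g + c ^+ 2 * ip D g g.
Proof.
move=> Lf Lg; have Lfg := L2_lin c Lf Lg.
rewrite ip_linl // !ip_linr // [ip D g f]ip_sym; ring.
Qed.

Lemma min_orth e f : L2 D e -> L2 D f ->
  (forall t, ip D e e <= ip D (fun x => e x + t * f x) (fun x => e x + t * f x)) ->
  ip D e f = 0.
Proof.
move=> Le Lf H; apply: (quad0 (ip_ge0 f)) => t.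
by have := H t; rewrite ip_quad // -subr_ge0 => h; lra.
Qed.

Lemma ip_zero_left f g : L2 D f -> L2 D g -> ip D f f = 0 -> ip D f g = 0.
Proof.
move=> Lf Lg f0; apply: (quad0 (ip_ge0 g)) => t.
by have := ip_ge0 (fun x => f x + t * g x); rewrite ip_quad // f0 add0r.
Qed.

Lemma ip0_ae f : L2 D f -> ip D f f = 0 -> L2eq D f (fun _ => 0).
Proof.
move=> Lf f0.
have fi := L2_mul_int Lf Lf.
have mf : measurable_fun D (EFin \o (fun x => f x * f x)).
  by case/integrableP: fi.
have I0 : (\int[leb]_(x in D) `|(EFin \o (fun x => (f x * f x)%R)) x| = 0)%E.
  transitivity (\int[leb]_(x in D) (EFin \o (fun x => (f x * f x)%R)) x)%E.
    by apply: eq_integral => x _; rewrite /= ger0_norm // -expr2 sqr_ge0.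
  rewrite -(fineK (@integrable_fin_num _ _ _ leb D mD _ fi)).
  have : ((ip D f f)%:E = 0)%E by rewrite f0.
  done.
have := (@ae_eq_integral_abs _ _ _ leb D mD _ mf).1 I0.
rewrite /L2eq /ae_eq; apply: filterS => x /= H Dx.
by have /eqP := H Dx; rewrite /cst eqe mulf_eq0 orbb => /eqP.
Qed.

End L2th.


Section S2.
Variable R : realType.
Local Notation leb := (@lebesgue_measure R).

Lemma L2_bound (D : set R) (mD : measurable D) (g : R -> R) (a b : R) (b0 b1 : bool) :
  measurable_fun D g ->
  (forall x, D x -> g x ^+ 2 <= \1_[set` Interval (BSide b0 a) (BSide b1 b)] x) ->
  L2 D g.
Proof.
move=> mg gb; apply/L2_intP; split => //.
have Hi := @integrableS _ _ _ leb setT D _ measurableT mD (@subsetT _ _)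
  (integrable_indic_itv a b b0 b1).
apply: (@le_integrable _ _ _ leb D mD _ _ _ _ Hi).
- apply/measurable_EFinP; exact: measurable_funX.
- move=> x Dx; rewrite /= lee_fin !ger0_norm ?sqr_ge0 //; try exact: gb.
  all: by rewrite indicE; case: (_ \in _).
Qed.

Lemma Dset_meas Dm : measurable (@Dset R Dm).
Proof.
case: Dm => [|T] /=; first exact: measurableT.
have -> : [set x : R | 0 <= x <= T%:R] = [set` `[0, T%:R]].
  by apply/seteqP; split => x /=; rewrite in_itv.
exact: measurable_itv.
Qed.

Lemma I_eq : [set w : R | - pi <= w <= pi] = [set` `[- pi, pi]].
Proof. by apply/seteqP; split => x /=; rewrite in_itv. Qed.

Lemma I_meas : measurable [set w : R | - pi <= w <= pi].
Proof. rewrite I_eq; exact: measurable_itv. Qed.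

Lemma L2_cos t : L2 [set w : R | - pi <= w <= pi] (fun w => cos (w * t)).
Proof.
apply: (@L2_bound _ I_meas _ (- pi) pi true false).
- apply: measurable_funS (@subsetT _ _) _ => //.
  apply: (measurableT_comp (continuous_measurable_fun (@continuous_cos R))).
  by apply: measurable_funM.
- move=> x Ix; rewrite I_eq in Ix; rewrite indicE (mem_set Ix) /=.
  have := cos2Dsin2 (x * t); have := sqr_ge0 (sin (x * t)); lra.
Qed.

Lemma L2_sin t : L2 [set w : R | - pi <= w <= pi] (fun w => sin (w * t)).
Proof.
apply: (@L2_bound _ I_meas _ (- pi) pi true false).
- apply: measurable_funS (@subsetT _ _) _ => //.
  apply: (measurableT_comp (continuous_measurable_fun (@continuous_sin R))).
  by apply: measurable_funM.
- move=> x Ix; rewrite I_eq in Ix; rewrite indicE (mem_set Ix) /=.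
  have := cos2Dsin2 (x * t); have := sqr_ge0 (cos (x * t)); lra.
Qed.

Lemma hfun_L2 Dm (alpha : R) tt n : 0 <= alpha -> L2 (Dset Dm) (hfun alpha tt n).
Proof.
move=> a0.
have E : hfun alpha tt n = fun x =>
   \1_[set` Interval (BSide true (tt n.-1)) (BSide true (tt n))] x *
   expR (- (alpha * (tt n - x))).
  apply/funext => x; rewrite /hfun indicE mem_setE in_itv /=.
  by case: ifP => _; rewrite ?mul1r ?mul0r.
apply: (@L2_bound _ (Dset_meas Dm) _ (tt n.-1) (tt n) true true).
- rewrite E; apply: measurable_funM.
    exact: measurable_indic (measurable_itv _).
  apply: measurable_funS (@subsetT _ _) _ => //.
  apply: (measurableT_comp (@measurable_expR R)).
  apply: measurable_funN; apply: measurable_funM => //.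
  by apply: measurable_funB.
- move=> x _; rewrite /hfun indicE mem_setE in_itv /=.
  case: (boolP ((tt n.-1 <= x) && (x < tt n))) => [/andP [h1 h2]|_] /=; last by rewrite expr0n.
  have e1 : expR (- (alpha * (tt n - x))) <= 1.
    rewrite expR_le1 oppr_le0 mulr_ge0 // subr_ge0 ltW //.
  have := expR_ge0 (- (alpha * (tt n - x))). nra.
Qed.

Lemma hfun_orth Dm (alpha : R) tt m n : tt m <= tt n.-1 ->
  ip (Dset Dm) (hfun alpha tt m) (hfun alpha tt n) = 0.
Proof.
move=> mn; rewrite /ip.
rewrite (@eq_Rintegral _ _ _ leb _ (fun _ => 0)).
  by rewrite Rintegral_cst ?mul0r //; exact: Dset_meas.
move=> x _; rewrite /hfun.
case: (boolP ((tt m.-1 <= x) && (x < tt m))) => [/andP [_ h]|_]; last by rewrite mul0r.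
have -> : (tt n.-1 <= x) = false by apply/negbTE; rewrite -ltNge (lt_le_trans h).
by rewrite /= mulr0.
Qed.

Lemma fourier_split (A B : R -> R) t :
  L2 [set w : R | - pi <= w <= pi] A -> L2 [set w : R | - pi <= w <= pi] B ->
  \int[leb]_(w in [set w : R | - pi <= w <= pi]) (A w * cos (w * t) - B w * sin (w * t))
  = ip [set w : R | - pi <= w <= pi] A (fun w => cos (w * t))
    - ip [set w : R | - pi <= w <= pi] B (fun w => sin (w * t)).
Proof.
move=> LA LB.
by rewrite (@RintegralB _ _ _ leb _ _ _ I_meas (L2_mul_int I_meas LA (L2_cos t))
   (L2_mul_int I_meas LB (L2_sin t))).
Qed.

Lemma inB_lin Dm (w b : R -> R) (c : R) : inB Dm w -> inB Dm b ->
  inB Dm (fun x => w x + c * b x).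
Proof.
move=> [Lw Bw] [Lb Bb]; split; first exact: L2_lin (Dset_meas Dm) _ _ _ Lw Lb.
case: Dm Lw Lb Bw Bb => [|T] Lw Lb /=.
- move=> [A1 [B1 [LA1 [LB1 E1]]]] [A2 [B2 [LA2 [LB2 E2]]]].
  exists (fun x => A1 x + c * A2 x), (fun x => B1 x + c * B2 x).
  have LA := L2_lin I_meas c LA1 LA2.
  have LB := L2_lin I_meas c LB1 LB2.
  split => //; split => //.
  move: E1 E2; rewrite /L2eq; apply: filterS2 => x H1 H2 Tx.
  rewrite H1 // H2 // !fourier_split //.
  rewrite !(ip_linl I_meas) //; [ring|exact: L2_sin|exact: L2_cos].
- move=> [a1 [b1 E1]] [a2 [b2 E2]].
  exists (fun k => a1 k + c * a2 k), (fun k => b1 k + c * b2 k).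
  move: E1 E2; rewrite /L2eq; apply: filterS2 => x H1 H2 Dx.
  rewrite H1 // H2 //.
  set S1 := \sum_(_ <= _ < _ | _) _.
  set S2 := \sum_(_ <= _ < _ | _) _.
  set S3 := \sum_(_ <= _ < _ | _) _.
  have -> : S3 = S1 + c * S2.
    rewrite /S1 /S2 /S3 mulr_sumr -big_split /=.
    by apply: eq_bigr => k _; ring.
  ring.
Qed.

End S2.


Section S3.
Variable R : realType.
Variable D : set R.
Hypothesis mD : measurable D.

Lemma L2_sum (I : Type) (r : seq I) (c : I -> R) (F : I -> R -> R) (g : R -> R) :
  L2 D g -> (forall i, L2 D (F i)) ->
  L2 D (fun x => g x + \sum_(i <- r) c i * F i x).
Proof.
elim: r g => [|i r IH] g Lg LF.
  by have -> : (fun x => g x + \sum_(i <- [::]) c i * F i x) = g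
    by apply/funext => x; rewrite big_nil addr0.
have -> : (fun x => g x + \sum_(j <- i :: r) c j * F j x) =
  (fun x => (fun y => g y + c i * F i y) x + \sum_(j <- r) c j * F j x).
  by apply/funext => x; rewrite big_cons addrA.
by apply: IH => //; exact: L2_lin.
Qed.

Lemma ip_sum (I : Type) (r : seq I) (c : I -> R) (F : I -> R -> R) (f g : R -> R) :
  L2 D f -> L2 D g -> (forall i, L2 D (F i)) ->
  ip D f (fun x => g x + \sum_(i <- r) c i * F i x) =
  ip D f g + \sum_(i <- r) c i * ip D f (F i).
Proof.
move=> Lf; elim: r g => [|i r IH] g Lg LF.
  have -> : (fun x => g x + \sum_(i <- [::]) c i * F i x) = g
    by apply/funext => x; rewrite big_nil addr0.
  by rewrite big_nil addr0.
have -> : (fun x => g x + \sum_(j <- i :: r) c j * F j x) =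
  (fun x => (fun y => g y + c i * F i y) x + \sum_(j <- r) c j * F j x).
  by apply/funext => x; rewrite big_cons addrA.
rewrite IH //; last exact: L2_lin.
by rewrite ip_linr // big_cons addrA.
Qed.

Lemma sub_eq (f g : R -> R) : (fun x => f x - g x) = (fun x => f x + (-1) * g x).
Proof. by apply/funext => x; rewrite mulN1r. Qed.

Lemma L2_sub f g : L2 D f -> L2 D g -> L2 D (fun x => f x - g x).
Proof. by move=> Lf Lg; rewrite sub_eq; exact: L2_lin. Qed.

End S3.

Lemma tt_mono (R : realType) (N : nat) (tt : nat -> R) :
  (forall n, (n < N)%N -> tt n < tt n.+1) ->
  forall i j, (i <= j)%N -> (j <= N)%N -> tt i <= tt j.
Proof.
move=> H i; elim => [|j IH] ij jN.
  by have -> : i = 0%N by apply/eqP; rewrite -leqn0.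
case: (ltngtP i j.+1) ij => // [ij _|-> _]; last by [].
apply: le_trans (IH ij (ltnW jN)) _; exact/ltW/H.
Qed.

Unset Implicit Arguments.
Set Strict Implicit.

Theorem proposition1 (R : realType) (Dm : domain) (alpha : R) (N : nat)
  (tt : nat -> R) (theta thetabar : 'I_N -> R) :
  domain_ok Dm -> 0 <= alpha -> (1 <= N)%N ->
  tt 0%N = 0 -> (forall n, (n < N)%N -> tt n < tt n.+1) ->
  (forall n, (n <= N)%N -> Dset Dm (tt n)) ->
  is_projN Dm alpha tt (@ranH R Dm alpha tt N) theta thetabar ->
  forall u v1 w1 v2 w2 : R -> R,
    L2 (Dset Dm) u ->
    is_projL2 (Dset Dm) (Cset Dm alpha tt theta) u v1 ->
    is_projL2 (Dset Dm) (inB Dm) v1 w1 ->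
    is_projL2 (Dset Dm) (Cset Dm alpha tt thetabar) u v2 ->
    is_projL2 (Dset Dm) (inB Dm) v2 w2 ->
    L2eq (Dset Dm) w1 w2.
Proof.
move=> _ a0 _ _ Htt _ [[b' [Bb' Eb']] minN] u v1 w1 v2 w2 Lu P1 Q1 P2 Q2.
set D := Dset Dm.
have mD : measurable D by exact: Dset_meas.
set h := fun i : 'I_N => hfun alpha tt i.+1.
have Lh : forall i, L2 D (h i) by move=> i; exact: hfun_L2.
have HopE : forall f i, Hop Dm alpha tt f i = ip D (h i) f by [].
have kerorth : forall (th : 'I_N -> R) v, is_projL2 D (Cset Dm alpha tt th) u v ->
    forall f, L2 D f -> (forall i, ip D (h i) f = 0) ->
    ip D (fun x => u x - v x) f = 0.
  move=> th v [[Lv Hv] minv] f Lf Hf.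
  apply: (min_orth mD (L2_sub mD Lu Lv) Lf) => t.
  have := minv (fun x => v x + (- t) * f x).
  have -> : (fun x => u x - (v x + - t * f x)) = (fun x => (u x - v x) + t * f x).
    by apply/funext => x; ring.
  apply; split; first exact: L2_lin.
  by move=> i; rewrite HopE ip_linr // -HopE Hv Hf mulr0 addr0.
have Borth : forall v w, is_projL2 D (inB Dm) v w -> L2 D v ->
    forall b, inB Dm b -> ip D (fun x => v x - w x) b = 0.
  move=> v w [Bw minw] Lv b Bb.
  apply: (min_orth mD (L2_sub mD Lv Bw.1) Bb.1) => t.
  have := minw (fun x => w x + (- t) * b x).
  have -> : (fun x => v x - (w x + - t * b x)) = (fun x => (v x - w x) + t * b x).
    by apply/funext => x; ring.
  by apply; exact: inB_lin.
set wt := fun i : 'I_N => ip D (h i) (h i).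
have ipNE : forall x y, ipN Dm alpha tt x y = \sum_(i < N) x i * y i / wt i by [].
have ipN_ge0 : forall x : 'I_N -> R, 0 <= ipN Dm alpha tt x x.
  move=> x; rewrite ipNE; apply: sumr_ge0 => i _.
  by rewrite divr_ge0 // ?ip_ge0 // -expr2 sqr_ge0.
have Corth : forall b, inB Dm b ->
    ipN Dm alpha tt (fun i => theta i - thetabar i) (Hop Dm alpha tt b) = 0.
  move=> b Bb.
  apply: (quad0 (ipN_ge0 (Hop Dm alpha tt b))) => t.
  have := minN (Hop Dm alpha tt (fun x => b' x + (- t) * b x)).
  have -> : (fun i => theta i - Hop Dm alpha tt (fun x => b' x + - t * b x) i) =
     (fun i => (theta i - thetabar i) + t * Hop Dm alpha tt b i).
    apply/funext => i; rewrite HopE ip_linr //; [|exact: Bb'.1|exact: Bb.1].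
    by rewrite Eb' !HopE; ring.
  have -> : ipN Dm alpha tt
     (fun i => theta i - thetabar i + t * Hop Dm alpha tt b i)
     (fun i => theta i - thetabar i + t * Hop Dm alpha tt b i) =
     ipN Dm alpha tt (fun i => theta i - thetabar i) (fun i => theta i - thetabar i)
     + 2 * t * ipN Dm alpha tt (fun i => theta i - thetabar i) (Hop Dm alpha tt b)
     + t ^+ 2 * ipN Dm alpha tt (Hop Dm alpha tt b : 'I_N -> R) (Hop Dm alpha tt b).
    rewrite !ipNE !mulr_sumr -!big_split /=.
    by apply: eq_bigr => i _; ring.
  move=> H; have := H (ex_intro _ _ (conj (inB_lin (- t) Bb' Bb) erefl)).
  lra.
have [[Lv1 Hv1] _] := P1.
have [[Lv2 Hv2] _] := P2.
have Lw1 := Q1.1.1.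
have Lw2 := Q2.1.1.
have Dorth : forall b, inB Dm b -> ip D (fun x => v1 x - v2 x) b = 0.
  move=> b Bb; have Lb := Bb.1.
  set c := fun i : 'I_N => ip D (h i) b / wt i.
  set k := fun x => b x + \sum_(i < N) (- c i) * h i x.
  have Lk : L2 D k by apply: L2_sum.
  have Hk : forall m, ip D (h m) k = 0.
    move=> m; rewrite /k ip_sum // (bigD1 m) //= big1 ?addr0.
      rewrite /c; case: (eqVneq (wt m) 0) => w0.
        rewrite w0 invr0 mulr0 oppr0 mul0r addr0; exact: ip_zero_left.
      by rewrite mulNr divfK // addrN.
    move=> i im.
    have im' : nat_of_ord i != nat_of_ord m by [].
    suff -> : ip D (h m) (h i) = 0 by rewrite mulr0.
    case: (ltngtP i m) im' => // [lt _|lt _].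
      rewrite ip_sym /h hfun_orth //=.
      by apply: (tt_mono Htt) => //; exact: ltnW (ltn_ord m).
    rewrite /h hfun_orth //=.
    by apply: (tt_mono Htt) => //; exact: ltnW (ltn_ord i).
  have g0 : ip D (fun x => v1 x - v2 x) k = 0.
    have -> : (fun x => v1 x - v2 x) =
       (fun x => (u x - v2 x) + (-1) * (u x - v1 x)).
      by apply/funext => x; ring.
    rewrite (ip_linl mD) //; try exact: (L2_sub mD).
    by rewrite (kerorth _ _ P2) // (kerorth _ _ P1) // mulr0 addr0.
  have e1 : forall i, ip D (fun x => v1 x - v2 x) (h i) = theta i - thetabar i.
    move=> i; rewrite ip_sym sub_eq ip_linr //.
    by rewrite -!HopE Hv1 Hv2 mulN1r.
  move: g0; rewrite /k ip_sum //; last exact: (L2_sub mD).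
  move/eqP; rewrite addr_eq0 => /eqP ->.
  have := Corth b Bb; rewrite ipNE => H0.
  transitivity (\sum_(i < N) (theta i - thetabar i) * Hop Dm alpha tt b i / wt i);
    last exact: H0.
  rewrite -sumrN; apply: eq_bigr => i _.
  by rewrite e1 /c HopE; ring.
set d := fun x => w1 x - w2 x.
have Ld : L2 D d by exact: (L2_sub mD).
have Bd : inB Dm d.
  rewrite /d sub_eq; apply: inB_lin; [exact: Q1.1|exact: Q2.1].
have dd : ip D d d = 0.
  have E : d = (fun x => (v1 x - v2 x) + (-1) *
      ((fun y => v1 y - w1 y) x + (-1) * (v2 x - w2 x))).
    by apply/funext => x; rewrite /d; ring.
  rewrite {1}E (ip_linl mD) //; try exact: (L2_sub mD); last first.
    by apply: (L2_lin mD); exact: (L2_sub mD).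
  rewrite (ip_linl mD) //; try exact: (L2_sub mD).
  rewrite Dorth // (Borth _ _ Q1) // (Borth _ _ Q2) //.
  lra.
have := ip0_ae mD Ld dd.
rewrite /L2eq; apply: filterS => x H Dx.
by have := H Dx; rewrite /d => /eqP; rewrite subr_eq0 => /eqP.
Qed.
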